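(* Let $d\ge 2$ and let $\rho$ be a density operator on $\mathbb{C}^d$. Suppose there exists a diagonal unitary $U$ (in the computational basis) such that $\rho'=U^\dagger\rho U$ has entries $\rho'_{ij}=|\rho_{ij}|$ for all $i,j$. Then $$C_{\mathcal{F}}(\rho)=\overline{C}_{\mathcal{R}}(\rho)=\overline{C}_{l_1}(\rho).$$
   Context: Fix the computational basis $\{|i\rangle\}_{i=0}^{d-1}$ of $\mathbb{C}^d$ as the incoherent basis. Let $\mathcal{D}(\mathbb{C}^d)$ be the set of density operators, $\Delta(\rho)=\sum_i|i\rangle\langle i|\rho|i\rangle\langle i|$, and $\mathcal{I}=\{\rho\in\mathcal{D}(\mathbb{C}^d):\rho=\Delta(\rho)\}$ the incoherent (diagonal) states. Let $|\phi^+\rangle=\frac{1}{\sqrt d}\sum_{i=0}^{d-1}|i\rangle$ and let $\mathcal{U}_d$ be the set of diagonal unitary matrices. The quantum coherence fraction is $C_{\mathcal{F}}(\rho)=\max_{U\in\mathcal{U}_d}\langle\phi^+|U^\dagger\rho U|\phi^+\rangle$ (equivalently, the maximum of $\langle\phi|\rho|\phi\rangle$ over maximally coherent states $|\phi\rangle$, i.e. states of the form $\frac1{\sqrt d}\sum_i e^{\mathrm{i}\theta_i}|i\rangle$). The $l_1$ norm of coherence is $C_{l_1}(\rho)=\sum_{i\ne j}|\rho_{ij}|$, and the robustness of coherence is $C_{\mathcal{R}}(\rho)=\min\{s\ge0: \exists\tau\in\mathcal{D}(\mathbb{C}^d),\ (\rho+s\tau)/(1+s)\in\mathcal{I}\}$.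 The normalized versions are $\overline{C}_{l_1}(\rho)=(1+C_{l_1}(\rho))/d$ and $\overline{C}_{\mathcal{R}}(\rho)=(1+C_{\mathcal{R}}(\rho))/d$. *)

(* Defs.v *)
From HB Require Import structures.
From mathcomp Require Import all_boot all_order all_algebra.
From mathcomp Require Import spectral sesquilinear.
From mathcomp Require Import complex.
From mathcomp Require Import boolp classical_sets reals.

Set Implicit Arguments.
Unset Strict Implicit.
Unset Printing Implicit Defensive.

Import Order.TTheory GRing.Theory Num.Theory.
Local Open Scope ring_scope.
Local Open Scope sesquilinear_scope.
Local Open Scope classical_set_scope.
Local Notation "x %:C" := (real_complex _ x) (format "x %:C").
Import ComplexField.

Section QCoherence.
Variable R : realType.
Local Notation C := (R[i]).

Definition psd (d : nat) (A : 'M[C]_d) : Prop :=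
  A ^t* = A /\ forall v : 'cV[C]_d, 0 <= (v ^t* *m A *m v) 0 0.

Definition density (d : nat) (A : 'M[C]_d) : Prop :=
  psd A /\ \tr A = 1.

Definition Delta (d : nat) (A : 'M[C]_d) : 'M[C]_d :=
  diag_mx (\row_i A i i).

Definition incoherent (d : nat) (A : 'M[C]_d) : Prop :=
  density A /\ A = Delta A.

Definition phi_plus (d : nat) : 'cV[C]_d :=
  const_mx ((Num.sqrt (d%:R : R))^-1)%:C.

Definition diag_unitary (d : nat) (U : 'M[C]_d) : Prop :=
  is_diag_mx U /\ U \is unitarymx.

(* <phi^+| U^dagger rho U |phi^+> ; real-valued for Hermitian rho,
   so we take its real part to compare in R *)
Definition fid_val (d : nat) (rho U : 'M[C]_d) : R :=
  complex.Re (((phi_plus d) ^t* *m U ^t* *m rho *m U *m phi_plus d) 0 0).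

(* quantum coherence fraction (the max is attained, so sup = max) *)
Definition C_F (d : nat) (rho : 'M[C]_d) : R :=
  sup [set x : R | exists U, diag_unitary U /\ x = fid_val rho U].

Definition C_l1 (d : nat) (rho : 'M[C]_d) : R :=
  \sum_(i < d) \sum_(j < d | j != i) ComplexField.Normc.normc (rho i j).

(* robustness of coherence (the min is attained, so inf = min) *)
Definition C_R (d : nat) (rho : 'M[C]_d) : R :=
  inf [set s : R | 0 <= s /\
        exists tau : 'M[C]_d, density tau /\
          incoherent (((1 + s)^-1)%:C *: (rho + s%:C *: tau))].

Definition C_l1_bar (d : nat) (rho : 'M[C]_d) : R := (1 + C_l1 rho) / d%:R.
Definition C_R_bar (d : nat) (rho : 'M[C]_d) : R := (1 + C_R rho) / d%:R.

End QCoherence.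

(* Main.v *)
Require Import Defs.
From HB Require Import structures.
From mathcomp Require Import all_boot all_order all_algebra.
From mathcomp Require Import spectral sesquilinear.
From mathcomp Require Import complex.
From mathcomp Require Import boolp classical_sets reals.
From mathcomp Require Import ring lra.
Import Order.TTheory GRing.Theory Num.Theory.
Local Open Scope ring_scope.
Local Open Scope sesquilinear_scope.
Local Notation "x %:C" := (real_complex _ x) (format "x %:C").

Section Helpers.
Variable R : realType.
Local Notation C := (R[i]).

Lemma conjR (x : R) : (x%:C)^* = x%:C.
Proof. by apply: conj_Creal; apply/complex_realP; exists x. Qed.

Lemma conjM (x y : C) : (x * y)^* = x^* * y^*. Proof. exact: rmorphM. Qed.
Lemma conjB (x y : C) : (x - y)^* = x^* - y^*. Proof. exact: rmorphB. Qed.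
Lemma conjMn (x : C) n : (x *+ n)^* = x^* *+ n. Proof. exact: rmorphMn. Qed.

Lemma normR_C (x : C) : `|x| = (ComplexField.Normc.normc x)%:C.
Proof. by []. Qed.

Lemma quadE (n : nat) (A : 'M[C]_n) (v : 'cV[C]_n) :
  (v ^t* *m A *m v) 0 0 = \sum_i \sum_j (v i 0)^* * A i j * v j 0.
Proof.
rewrite mxE exchange_big /=; apply: eq_bigr => j _.
rewrite mxE mulr_suml; apply: eq_bigr => i _; by rewrite !mxE.
Qed.

Lemma diag_conjE (n : nat) (U A : 'M[C]_n) i j : is_diag_mx U ->
  (U ^t* *m A *m U) i j = (U i i)^* * A i j * U j j.
Proof.
move=> /is_diag_mxP hU.
rewrite mxE (bigD1 j) //= big1 ?addr0; last first.
  by move=> k hk; rewrite hU ?mulr0 // eq_sym.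
congr (_ * _); rewrite mxE (bigD1 i) //= big1 ?addr0; last first.
  by move=> k hk; rewrite !mxE hU ?conjC0 ?mul0r // eq_sym.
by rewrite !mxE.
Qed.

Lemma diag_unit_entry (n : nat) (U : 'M[C]_n) i : diag_unitary U ->
  U i i * (U i i)^* = 1.
Proof.
move=> [hd /unitarymxP hu].
have := congr1 (fun M : 'M[C]_n => M i i) hu; rewrite !mxE eqxx /= => h; rewrite -[RHS]h.
rewrite (bigD1 i) //= big1 ?addr0 ?mxE //.
by move=> k hk; rewrite (is_diag_mxP hd) ?mul0r // eq_sym.
Qed.


Lemma phiQ (n : nat) (B : 'M[C]_n) : (0 < n)%N ->
  ((phi_plus R n) ^t* *m B *m phi_plus R n) 0 0 =
  ((n%:R : R)^-1)%:C * \sum_i \sum_j B i j.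
Proof.
move=> hn; rewrite quadE mulr_sumr; apply: eq_bigr => i _.
rewrite mulr_sumr; apply: eq_bigr => j _; rewrite !mxE conjR.
rewrite mulrC mulrA -rmorphM -expr2 exprVn sqr_sqrtr ?ler0n //.
Qed.

Lemma laplacian (n : nat) (a : 'I_n -> 'I_n -> C) (x : 'I_n -> C) :
  (forall i j, a i j = a j i) -> (forall i j, 0 <= a i j) ->
  0 <= \sum_i \sum_j a i j * ((x i)^* * x i - (x i)^* * x j).
Proof.
move=> hs hp.
set T := \sum_i _.
have h2 : \sum_i \sum_j a i j * ((x i - x j) * (x i - x j)^*) = T + T.
  have -> : \sum_i \sum_j a i j * ((x i - x j) * (x i - x j)^*) =
     \sum_i \sum_j (a i j * ((x i)^* * x i - (x i)^* * x j) +
                    a i j * ((x j)^* * x j - (x j)^* * x i)).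
    apply: eq_bigr => i _; apply: eq_bigr => j _.
    rewrite rmorphB /=; ring.
  under eq_bigr do rewrite big_split /=.
  rewrite big_split /=; congr (_ + _).
  rewrite exchange_big /=; apply: eq_bigr => i _; apply: eq_bigr => j _.
  by rewrite hs.
have : 0 <= T + T.
  rewrite -h2; apply: sumr_ge0 => i _; apply: sumr_ge0 => j _.
  by apply: mulr_ge0; [apply: hp | apply: mul_conjC_ge0].
by rewrite -mulr2n pmulrn_lge0.
Qed.

End Helpers.

Theorem theorem1 (R : realType) (d : nat) (hd : (2 <= d)%N)
  (rho : 'M[R[i]]_d) (hrho : density rho)
  (hU : exists U : 'M[R[i]]_d, diag_unitary U /\
          forall i j, (U ^t* *m rho *m U) i j = `|rho i j|) :
  C_F rho = C_R_bar rho /\ C_R_bar rho = C_l1_bar rho.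
Proof.
have hd0 : (0 < d)%N by apply: leq_trans hd.
case: hU => U [hUd hUe].
have hrho' := hrho.
case: hrho => [[hherm hpsd] htr].
pose a i j := `|rho i j|.
have ha0 i j : 0 <= a i j by apply: normr_ge0.
have hu i : U i i * (U i i)^* = 1 by apply: diag_unit_entry.
have hu' i : (U i i)^* * U i i = 1 by rewrite mulrC hu.
have hF1 i j : rho i j = U i i * a i j * (U j j)^*.
  rewrite /a -hUe diag_conjE; last by case: hUd.
  by rewrite !mulrA hu mul1r -mulrA hu mulr1.
have hconj i j : (rho j i)^* = rho i j.
  have := congr1 (fun M : 'M[R[i]]_d => M i j) hherm; by rewrite !mxE.
have hsym i j : a i j = a j i by rewrite /a -hconj norm_conjC.
have hdiag i : rho i i = a i i by rewrite hF1 mulrAC hu mul1r.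
set L := C_l1 rho.
have hLC : L%:C = \sum_i \sum_(j | j != i) a i j.
  rewrite /L /C_l1 rmorph_sum; apply: eq_bigr => i _; by rewrite rmorph_sum.
have hS : \sum_i \sum_j a i j = 1 + L%:C.
  rewrite hLC -htr /mxtrace -big_split; apply: eq_bigr => i _ /=.
  by rewrite (bigD1 i) //= hdiag.
have hL0 : 0 <= L.
  rewrite -ler0c hLC; apply: sumr_ge0 => i _; by apply: sumr_ge0.
pose kd := ((d%:R : R)^-1).
have hkd : 0 < kd by rewrite invr_gt0 ltr0n.
have hassoc V X : (phi_plus R d) ^t* *m V ^t* *m X *m V *m phi_plus R d =
   (phi_plus R d) ^t* *m (V ^t* *m X *m V) *m phi_plus R d by rewrite !mulmxA.
have hQrho : ((phi_plus R d) ^t* *m U ^t* *m rho *m U *m phi_plus R d) 0 0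
   = (kd * (1 + L))%:C.
  rewrite hassoc phiQ // rmorphM rmorphD rmorph1 -hS; congr (_ * _).
  by apply: eq_bigr => i _; apply: eq_bigr => j _; rewrite hUe.
have hCF : C_F rho = kd * (1 + L).
  have hfid_le V : diag_unitary V -> fid_val rho V <= kd * (1 + L).
    move=> hV; have hVd : is_diag_mx V by case: hV.
    have hV1 k : `|V k k| = 1.
      apply/eqP; rewrite -sqrp_eq1 ?normr_ge0 // normCK.
      by rewrite (@diag_unit_entry R d V k hV).
    rewrite /fid_val hassoc phiQ //.
    set z := _ * _.
    have hz : `|z| <= (kd * (1 + L))%:C.
      rewrite /z normrM ger0_norm ?ler0c ?invr_ge0 ?ler0n // rmorphM.
      apply: ler_wpM2l; first by rewrite ler0c invr_ge0 ler0n.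
      rewrite rmorphD rmorph1 -hS.
      apply: le_trans (ler_norm_sum _ _ _) _; apply: ler_sum => i _.
      apply: le_trans (ler_norm_sum _ _ _) _; apply: ler_sum => j _.
      by rewrite diag_conjE // !normrM norm_conjC !hV1 mul1r mulr1.
    rewrite -lecR; apply: le_trans hz.
    apply: le_trans (normc_ge_Re z); by rewrite lecR ler_norm.
  have hmem : (fun x : R => exists V, diag_unitary V /\ x = fid_val rho V)
                (kd * (1 + L)).
    exists U; split => //; by rewrite /fid_val hQrho.
  have hub : ubound (fun x : R => exists V, diag_unitary V /\ x = fid_val rho V)
               (kd * (1 + L)).
    by move=> x [V [hV ->]]; apply: hfid_le.
  rewrite /C_F; apply/le_anti/andP; split.
    by apply: ge_sup => //; exists (kd * (1 + L)).
  by apply: ub_le_sup => //; exists (kd * (1 + L)).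
have hCR : C_R rho = L.
  pose E := (fun s : R => 0 <= s /\
        exists tau : 'M[R[i]]_d, density tau /\
          incoherent (((1 + s)^-1)%:C *: (rho + s%:C *: tau))).
  pose Q (X : 'M[R[i]]_d) :=
    ((phi_plus R d) ^t* *m U ^t* *m X *m U *m phi_plus R d) 0 0.
  have hQ X : Q X = kd%:C * \sum_i \sum_j (U i i)^* * X i j * U j j.
    rewrite /Q hassoc phiQ //; congr (_ * _).
    apply: eq_bigr => i _; apply: eq_bigr => j _.
    by rewrite diag_conjE //; case: hUd.
  have hQlin X Y c : Q (X + c *: Y) = Q X + c * Q Y.
    rewrite !hQ mulrCA -mulrDr; congr (_ * _).
    rewrite mulr_sumr -big_split; apply: eq_bigr => i _.
    rewrite mulr_sumr -big_split; apply: eq_bigr => j _.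
    rewrite !mxE /=; ring.
  have hlow s : E s -> L <= s.
    move=> [hs0 [tau [[[th tp] tt] [[[Mh Mp] Mt] Md]]]].
    set M := _ *: _ in Mh Mp Mt Md.
    have hs1 : 0 < 1 + s by lra.
    have hX : rho + s%:C *: tau = 0 + (1 + s)%:C *: M.
      rewrite add0r /M scalerA -rmorphM mulfV ?scale1r //; by rewrite gt_eqF.
    have hQM : Q M = kd%:C.
      rewrite hQ -[RHS]mulr1 -Mt; congr (_ * _).
      rewrite /mxtrace; apply: eq_bigr => i _.
      rewrite (bigD1 i) //= big1 ?addr0.
        by rewrite mulrAC hu' mul1r.
      move=> j hj; rewrite Md !mxE eq_sym (negbTE hj) mulr0n.
      by rewrite mulr0 mul0r.
    have hQt : 0 <= Q tau.
      rewrite /Q; have := tp (U *m phi_plus R d); by rewrite trmx_mul map_mxM !mulmxA.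
    have := congr1 Q hX; rewrite !hQlin hQM.
    have -> : Q 0 = 0 by rewrite /Q mulmx0 !mul0mx mxE.
    rewrite add0r /Q hQrho -/(Q tau) => h.
    have : (kd * (1 + L))%:C <= (kd * (1 + s))%:C.
      rewrite [X in _ <= X]rmorphM [X in _ <= X]mulrC -h.
      rewrite lerDl; apply: mulr_ge0 => //; by rewrite ler0c.
    rewrite lecR ler_pM2l // lerD2l //.
  have hmemL : E L.
    split => //.
    case: (eqVneq L 0) => hL.
      exists rho; split => //.
      have -> : ((1 + L)^-1)%:C *: (rho + L%:C *: rho) = rho.
        by rewrite hL addr0 invr1 rmorph0 rmorph1 scale0r addr0 scale1r.
      split => //.
      apply/matrixP => i j; rewrite !mxE.
      case: (eqVneq i j) => [->|hij]; first by rewrite mulr1n.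
      rewrite mulr0n.
      have h0 : \sum_i \sum_(j | j != i) a i j = 0 by rewrite -hLC hL rmorph0.
      have hi : \sum_(k | k != i) a i k = 0.
        apply: (psumr_eq0P (P:=predT) (F:=fun i => \sum_(k | k != i) a i k)) => //.
        by move=> ? _; apply: sumr_ge0.
      have : a i j = 0.
        apply: (psumr_eq0P (P:=fun k => k != i) (F:=fun k => a i k)) => //.
        by rewrite eq_sym.
      by rewrite /a => /eqP; rewrite normr_eq0 => /eqP.
    pose D := diag_mx (\row_i \sum_j a i j) : 'M[R[i]]_d.
    pose tau := ((L^-1)%:C) *: (D - rho).
    exists tau.
    have hLc : L%:C != 0.
      by apply: contra hL => /eqP h; apply/eqP; apply: complexI; rewrite h rmorph0.
    have hDrho : rho + L%:C *: tau = D.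
      by rewrite /tau scalerA -rmorphM mulfV // rmorph1 scale1r addrC subrK.
    have hDe i j : D i j = (\sum_k a i k) *+ (i == j) by rewrite !mxE.
    have hs_ge0 i : 0 <= \sum_k a i k by apply: sumr_ge0.
    have hS' : 1 + L%:C = (1 + L)%:C by rewrite rmorphD rmorph1.
    have htrD : \tr D = (1 + L)%:C.
      rewrite mxtrace_diag -hS' -hS; apply: eq_bigr => i _; by rewrite mxE.
    rewrite hDrho; split.
      split; [split|].
      - apply/matrixP => i j; rewrite /tau !mxE conjM conjB.
        rewrite (geC0_conj (_ : 0 <= (L^-1)%:C)); last by rewrite ler0c invr_ge0.
        rewrite hconj conjMn geC0_conj ?hs_ge0 //.
        by case: (eqVneq i j) => [<-|hij].
      - move=> v; rewrite /tau -scalemxAr -scalemxAl mxE.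
        apply: mulr_ge0; first by rewrite ler0c invr_ge0.
        pose x i := (U i i)^* * v i 0.
        have hx i : (x i)^* * x i = (v i 0)^* * v i 0.
          by rewrite /x conjM conjCK mulrACA hu mul1r.
        rewrite quadE.
        have -> : \sum_i \sum_j (v i 0)^* * (D - rho) i j * v j 0 =
            \sum_i \sum_j a i j * ((x i)^* * x i - (x i)^* * x j).
          apply: eq_bigr => i _.
          have e1 j : (v i 0)^* * (D - rho) i j * v j 0 =
              (v i 0)^* * D i j * v j 0 - a i j * ((x i)^* * x j).
            rewrite [(D - rho) i j]mxE [(- rho) i j]mxE hF1 /x conjM conjCK; ring.
          rewrite (eq_bigr _ (fun j _ => e1 j)) sumrB.
          have e2 j : a i j * ((x i)^* * x i - (x i)^* * x j) =
              a i j * ((x i)^* * x i) - a i j * ((x i)^* * x j).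
            by rewrite mulrBr.
          rewrite (eq_bigr _ (fun j _ => e2 j)) sumrB; congr (_ - _).
          rewrite (bigD1 i) //= big1 ?addr0; last first.
            by move=> j hj; rewrite hDe eq_sym (negbTE hj) mulr0n mulr0 mul0r.
          by rewrite hDe eqxx mulr1n -mulr_suml hx; ring.
        by apply: laplacian.
      - rewrite /tau mxtraceZ raddfB /= htrD htr -hS' addrAC subrr add0r.
        by rewrite -rmorphM mulVf // rmorph1.
    have h1L : 0 < 1 + L by lra.
    have h1Lc : (1 + L)%:C != 0 by rewrite -hS' hS' (gt_eqF) // ltcR.
    split; [split; [split|] |].
    - apply/matrixP => i j; rewrite !mxE conjM.
      rewrite (geC0_conj (_ : 0 <= ((1 + L)^-1)%:C)); last by rewrite ler0c invr_ge0 ltW.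
      rewrite conjMn geC0_conj ?hs_ge0 //.
      by case: (eqVneq i j) => [<-|hij].
    - move=> v; rewrite -scalemxAr -scalemxAl mxE.
      apply: mulr_ge0; first by rewrite ler0c invr_ge0 ltW.
      rewrite quadE; apply: sumr_ge0 => i _; apply: sumr_ge0 => j _.
      rewrite hDe; case: (eqVneq i j) => [<-|hij].
        rewrite mulr1n mulrAC; apply: mulr_ge0 => //.
        by rewrite mulrC mul_conjC_ge0.
      by rewrite mulr0n mulr0 mul0r.
    - by rewrite mxtraceZ htrD -rmorphM mulVf ?rmorph1 // gt_eqF.
    apply/matrixP => i j; rewrite /Delta !mxE.
    by case: (i == j); rewrite ?eqxx ?mulr1n ?mulr0n ?mulr0.
  apply/le_anti/andP; split.
    apply: ge_inf => //; exists 0; move=> s [hs _]; exact: hs.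
  apply: lb_le_inf; first by exists L.
  by move=> s hs; apply: hlow.
by rewrite /C_R_bar /C_l1_bar hCR hCF mulrC.
Qed.
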